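(* $\mathcal{A}(\bm{p})$ is a coherent ring: every finitely generated ideal $I$ of $\mathcal{A}(\bm{p})$ is finitely presented, i.e. there is an exact sequence of $\mathcal{A}(\bm{p})$-modules $0\to K\to F\to I\to0$ with $F$ finitely generated free and $K$ finitely generated.
   Context: Fix $\bm{p}:\mathbb{N}_0\to(0,\infty)$ with $\lim_{n\to\infty}\bm{p}(n)^{1/n}=\infty$. For an entire function $f$ write $f(z)=\sum_{n\ge0}\widehat f(n)z^n$. $\mathcal{A}(\bm{p})$ is the set of entire functions $f$ with $\sup_{n\ge 0}\bm{p}(n)|\widehat f(n)|<\infty$, with pointwise addition and scalar multiplication and the weighted Hadamard product $(f\ast g)(z)=\sum_{n\ge0}\bm{p}(n)\widehat f(n)\widehat g(n)z^n$; it is a commutative unital ring with unit $\varepsilon(z)=\sum_{n\ge0}\frac{z^n}{\bm{p}(n)}$. *)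

(* Defs.v *)
From Stdlib Require Import Reals.
From Coquelicot Require Import Coquelicot.
Open Scope R_scope.

(* An entire function f is represented by its Taylor coefficient sequence
   a : nat -> C (a n = \hat f(n)).  The weight p : nat -> R. *)

(* membership in A(p): entire with sup_n p(n) |\hat f(n)| < oo.
   (Entireness, limsup |a n|^(1/n) = 0, follows from the bound since
   p(n)^(1/n) -> oo; we state it explicitly anyway.) *)
Definition entire_coeffs (a : nat -> C) : Prop :=
  forall r : R, 0 <= r -> ex_series (fun n => Cmod (a n) * r ^ n).

Definition inA (p : nat -> R) (a : nat -> C) : Prop :=
  entire_coeffs a /\ exists M : R, forall n, p n * Cmod (a n) <= M.

Definition hmul (p : nat -> R) (a b : nat -> C) : nat -> C :=
  fun n => (RtoC (p n) * a n * b n)%C.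

Fixpoint csum (m : nat) (f : nat -> C) : C :=
  match m with
  | O => RtoC 0
  | S k => (csum k f + f k)%C
  end.

(* A(p)-linear combination  sum_{i<m} x_i * g_i  (ring product = hmul) *)
Definition lincomb (p : nat -> R) (m : nat) (x g : nat -> nat -> C) : nat -> C :=
  fun k => csum m (fun i => hmul p (x i) (g i) k).

Definition in_ideal_gen (p : nat -> R) (m : nat) (g : nat -> nat -> C)
    (f : nat -> C) : Prop :=
  exists x : nat -> nat -> C,
    (forall i, (i < m)%nat -> inA p (x i)) /\
    forall k, f k = lincomb p m x g k.

Definition in_kernel (p : nat -> R) (n : nat) (h : nat -> nat -> C)
    (x : nat -> nat -> C) : Prop :=
  (forall i, (i < n)%nat -> inA p (x i)) /\
  forall k, lincomb p n x h k = RtoC 0.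

(* the kernel of  A(p)^n -> A(p), e_i |-> h_i  is a finitely generated
   A(p)-submodule of A(p)^n : generated by vectors ks_0, ..., ks_{r-1}
   (ks j i = i-th component of the j-th generator) *)
Definition kernel_fin_gen (p : nat -> R) (n : nat) (h : nat -> nat -> C) : Prop :=
  exists (r : nat) (ks : nat -> nat -> nat -> C),
    (forall j, (j < r)%nat -> in_kernel p n h (ks j)) /\
    forall x, in_kernel p n h x ->
      exists c : nat -> nat -> C,
        (forall j, (j < r)%nat -> inA p (c j)) /\
        forall i, (i < n)%nat -> forall k,
          x i k = lincomb p r c (fun j => ks j i) k.

(* Main.v *)
Require Import Defs.
From Stdlib Require Import Reals Lra Lia Psatz.
From Coquelicot Require Import Coquelicot.
Open Scope R_scope.

Lemma entire_of_bound (p : nat -> R) (a : nat -> C) (M : R)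
  (p_pos : forall n, 0 < p n)
  (p_growth : is_lim_seq (fun n => Rpower (p n) (/ INR n)) p_infty)
  (hb : forall n, p n * Cmod (a n) <= M) : entire_coeffs a.
Proof.
  intros r hr.
  assert (HM : 0 <= M).
  { specialize (hb O). pose proof (p_pos O). pose proof (Cmod_ge_0 (a O)). nra. }
  apply is_lim_seq_spec in p_growth. destruct (p_growth (2*(r+1))) as [N HN].
  apply (ex_series_incr_n _ (S N)).
  apply (@ex_series_le R_AbsRing R_CompleteNormedModule _ (fun k => M * (/2)^(S N + k))).
  - intros k. set (n := (S N + k)%nat).
    assert (Hn : (N <= n)%nat) by (unfold n; lia).
    specialize (HN n Hn).
    set (q := Rpower (p n) (/ INR n)) in *.
    assert (Hq : 0 < q) by (unfold q, Rpower; apply exp_pos).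
    assert (Hpq : p n = q ^ n).
    { rewrite <- Rpower_pow by lra. unfold q. rewrite Rpower_mult.
      rewrite Rinv_l. symmetry; apply Rpower_1, p_pos. apply not_0_INR. unfold n; lia. }
    change (norm (Cmod (a n) * r ^ n)) with (Rabs (Cmod (a n) * r ^ n)).
    pose proof (Cmod_ge_0 (a n)). pose proof (pow_le r n hr).
    rewrite Rabs_pos_eq by nra.
    assert (Ha : Cmod (a n) <= M / p n).
    { specialize (hb n). pose proof (p_pos n). apply Rmult_le_reg_l with (p n); auto.
      field_simplify; lra. }
    assert (H2 : r ^ n <= (/2)^n * q^n).
    { rewrite <- Rpow_mult_distr. apply pow_incr. lra. }
    pose proof (p_pos n).
    apply Rle_trans with (M / p n * r^n). apply Rmult_le_compat_r; lra.
    rewrite Hpq in *. unfold Rdiv.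
    apply Rle_trans with (M * / q^n * ((/2)^n * q^n)).
    apply Rmult_le_compat_l; auto. apply Rmult_le_pos; auto. left; apply Rinv_0_lt_compat; auto.
    right. field. apply pow_nonzero; lra.
  - apply (ex_series_incr_n (fun k => M * (/2)^k)).
    apply (ex_series_scal_l M (fun k => (/2)^k)). apply ex_series_geom.
    rewrite Rabs_pos_eq; lra.
Qed.

Lemma csum_ext m f f' : (forall i, (i < m)%nat -> f i = f' i) -> csum m f = csum m f'.
Proof. induction m; intros H; simpl; auto. rewrite IHm by (intros; apply H; lia). rewrite H by lia. auto. Qed.

Lemma csum_plus m f f' : csum m (fun i => f i + f' i)%C = (csum m f + csum m f')%C.
Proof. induction m; simpl. ring. rewrite IHm. ring. Qed.

Lemma csum_scal m c f : csum m (fun i => c * f i)%C = (c * csum m f)%C.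
Proof. induction m; simpl. ring. rewrite IHm. ring. Qed.

Lemma csum0 m : csum m (fun _ => RtoC 0) = RtoC 0.
Proof. induction m; simpl; [auto| rewrite IHm; ring]. Qed.

Definition dl (i j : nat) : C := if Nat.eq_dec i j then RtoC 1 else RtoC 0.

Lemma csum_dl_r m i x : (i < m)%nat -> csum m (fun j => dl i j * x j)%C = x i.
Proof.
  induction m; intros H; [lia|]. simpl. unfold dl at 2.
  destruct (Nat.eq_dec i m).
  - subst. rewrite (csum_ext _ _ (fun _ => RtoC 0)).
    + rewrite csum0. ring.
    + intros j Hj. unfold dl. destruct (Nat.eq_dec m j); [lia|ring].
  - rewrite IHm by lia. ring.
Qed.

Lemma csum_dl_l m j x : (j < m)%nat -> csum m (fun i => dl i j * x i)%C = x j.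
Proof.
  intros H. rewrite <- (csum_dl_r m j x H). apply csum_ext. intros i _.
  unfold dl. destruct (Nat.eq_dec i j), (Nat.eq_dec j i); try lia; auto.
Qed.

Fixpoint rsum (m : nat) (f : nat -> R) : R :=
  match m with O => 0 | S k => rsum k f + f k end.

Lemma rsum_csum m g : RtoC (rsum m (fun l => Cmod (g l) ^ 2)) = csum m (fun l => g l * Cconj (g l))%C.
Proof. induction m; simpl. auto. rewrite <- IHm, <- Cmod2_conj. rewrite RtoC_plus. auto. Qed.

Lemma rsum_nonneg m f : (forall i, 0 <= f i) -> 0 <= rsum m f.
Proof. intros H; induction m; simpl. lra. specialize (H m). lra. Qed.

Lemma rsum_ge m f i : (forall i, 0 <= f i) -> (i < m)%nat -> f i <= rsum m f.
Proof.
  intros H Hi; induction m; simpl; [lia|].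
  destruct (Nat.eq_dec i m). subst. pose proof (rsum_nonneg m f H). lra.
  specialize (IHm ltac:(lia)). specialize (H m). lra.
Qed.

Lemma rsum_zero m g i : rsum m (fun l => Cmod (g l) ^ 2) = 0 -> (i < m)%nat -> g i = RtoC 0.
Proof.
  intros H Hi. apply Cmod_eq_0.
  pose proof (rsum_ge m (fun l => Cmod (g l) ^ 2) i ltac:(intros; apply pow2_ge_0) Hi). rewrite H in H0.
  pose proof (Cmod_ge_0 (g i)). simpl in H0. nra.
Qed.
Section X.
Variable (p : nat -> R) (p_pos : forall n, 0 < p n) (m : nat) (g : nat -> nat -> C).

Definition SS k := rsum m (fun l => Cmod (g l k) ^ 2).
Definition ks j i k := ((dl i j - g j k * Cconj (g i k) * RtoC (/ SS k)) * RtoC (/ p k))%C.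

Lemma pinv k : (RtoC (p k) * RtoC (/ p k))%C = RtoC 1.
Proof. rewrite <- RtoC_mult. f_equal. field. pose proof (p_pos k); lra. Qed.

Lemma pcanc k z w : (RtoC (p k) * (z * RtoC (/ p k)) * w)%C = (z * w)%C.
Proof. transitivity (z * w * (RtoC (p k) * RtoC (/ p k)))%C. ring. rewrite pinv. ring. Qed.

Lemma pcanc2 k z w : (RtoC (p k) * w * (z * RtoC (/ p k)))%C = (w * z)%C.
Proof. transitivity (w * z * (RtoC (p k) * RtoC (/ p k)))%C. ring. rewrite pinv. ring. Qed.

Lemma ks_kernel j k : (j < m)%nat -> lincomb p m (ks j) g k = RtoC 0.
Proof.
  intros Hj. unfold lincomb, hmul.
  rewrite (csum_ext _ _ (fun i => dl i j * g i k + (- (g j k * RtoC (/ SS k))) * (g i k * Cconj (g i k)))%C).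
  2:{ intros i _. unfold ks. rewrite pcanc. ring. }
  rewrite csum_plus.
  rewrite csum_scal, csum_dl_l by auto. rewrite <- rsum_csum. fold (SS k).
  destruct (Req_dec (SS k) 0) as [H0|H0].
  - rewrite (rsum_zero m (fun l => g l k) j H0 Hj). ring.
  - replace (- (g j k * RtoC (/ SS k)) * RtoC (SS k))%C with (- g j k * (RtoC (/ SS k * SS k)))%C
      by (rewrite RtoC_mult; ring).
    rewrite Rinv_l by auto. ring.
Qed.

Lemma ks_decomp x i k : (i < m)%nat -> lincomb p m x g k = RtoC 0 ->
  x i k = lincomb p m x (fun j => ks j i) k.
Proof.
  intros Hi H. unfold lincomb, hmul in *.
  assert (H' : csum m (fun j => x j k * g j k)%C = RtoC 0).
  { assert (E : (RtoC (/ p k) * csum m (fun j => RtoC (p k) * x j k * g j k))%C = csum m (fun j => x j k * g j k)%C).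
    { rewrite <- csum_scal. apply csum_ext. intros. transitivity (x i0 k * g i0 k * (RtoC (p k) * RtoC (/ p k)))%C. ring. rewrite pinv. ring. }
    rewrite <- E, H. ring. }
  rewrite (csum_ext _ _ (fun j => dl i j * x j k + (- (Cconj (g i k) * RtoC (/ SS k))) * (x j k * g j k))%C).
  2:{ intros j _. unfold ks. rewrite pcanc2. ring. }
  rewrite csum_plus, csum_scal, csum_dl_r, H' by auto. ring.
Qed.

Lemma ks_bound j i k : (i < m)%nat -> (j < m)%nat -> p k * Cmod (ks j i k) <= 2.
Proof.
  intros Hi Hj. unfold ks. rewrite Cmod_mult, Cmod_R.
  pose proof (p_pos k). rewrite Rabs_pos_eq by (left; apply Rinv_0_lt_compat; auto).
  replace (p k * (Cmod (dl i j - g j k * Cconj (g i k) * RtoC (/ SS k)) * / p k))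
    with (Cmod (dl i j - g j k * Cconj (g i k) * RtoC (/ SS k))) by (field; lra).
  unfold Cminus. eapply Rle_trans. apply Cmod_triangle.
  assert (Hd : Cmod (dl i j) <= 1).
  { unfold dl. destruct (Nat.eq_dec i j); rewrite Cmod_R, Rabs_pos_eq; lra. }
  assert (Ht : Cmod (- (g j k * Cconj (g i k) * RtoC (/ SS k))) <= 1).
  { rewrite Cmod_opp.
    rewrite !Cmod_mult, Cmod_conj, Cmod_R.
    destruct (Req_dec (SS k) 0) as [H0|H0].
    - rewrite (rsum_zero m (fun l => g l k) j H0 Hj), Cmod_0. lra.
    - assert (HS : 0 <= SS k) by (apply rsum_nonneg; intros; apply pow2_ge_0).
      assert (Hgi := rsum_ge m (fun l => Cmod (g l k) ^ 2) i ltac:(intros; apply pow2_ge_0) Hi).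
      assert (Hgj := rsum_ge m (fun l => Cmod (g l k) ^ 2) j ltac:(intros; apply pow2_ge_0) Hj).
      fold (SS k) in Hgi, Hgj. simpl in Hgi, Hgj.
      pose proof (Cmod_ge_0 (g i k)). pose proof (Cmod_ge_0 (g j k)).
      rewrite Rabs_pos_eq by (left; apply Rinv_0_lt_compat; lra).
      assert (Cmod (g j k) * Cmod (g i k) <= SS k) by nra.
      apply Rmult_le_reg_r with (SS k). lra.
      replace (Cmod (g j k) * Cmod (g i k) * / SS k * SS k) with (Cmod (g j k) * Cmod (g i k)) by (field; lra).
      lra. }
  lra.
Qed.
End X.

Theorem mainTheorem15 (p : nat -> R)
  (p_pos : forall n, 0 < p n)
  (p_growth : is_lim_seq (fun n => Rpower (p n) (/ INR n)) p_infty) :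
  forall (m : nat) (g : nat -> nat -> C),
    (forall i, (i < m)%nat -> inA p (g i)) ->
    exists (n : nat) (h : nat -> nat -> C),
      (forall i, (i < n)%nat -> inA p (h i)) /\
      (forall f, in_ideal_gen p m g f <-> in_ideal_gen p n h f) /\
      kernel_fin_gen p n h.
Proof.
  intros m g Hg. exists m, g. split; [exact Hg|]. split; [intros; tauto|].
  exists m, (ks p m g). split.
  - intros j Hj. split.
    + intros i Hi. split.
      * apply (entire_of_bound p _ 2 p_pos p_growth).
        intros k. apply ks_bound; auto.
      * exists 2. intros k. apply ks_bound; auto.
    + intros k. apply ks_kernel; auto.
  - intros x [Hx Hk]. exists x. split; [exact Hx|].
    intros i Hi k. apply ks_decomp; auto.
Qed.
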